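(* Let $\ell$ be a positive even integer, let $n$ be a positive integer that is a multiple of $\ell/2$, and let $u:\{-n,\dots,n\}\to\mathbb{R}$ satisfy $u(j)=u(-j)$ for all $j$ and $\sum_{j=-n}^{n}u(j)=1$. Assume that there exists a polynomial $Q(z)=\sum_{k=0}^{m}b_kz^k$ (with complex coefficients) having no zeros in the open unit disk $\mathbb{D}=\{z\in\mathbb{C}:|z|<1\}$ such that $\widehat{u}(\xi)=|Q(e^{i\xi})|^{\ell}$ for all $\xi\in\mathbb{T}$. Then $$\sup_{0\neq f\in\ell^2(\mathbb{Z})}\frac{\|\nabla^{\ell}(u\ast f)\|_{\ell^2(\mathbb{Z})}}{\|f\|_{\ell^2(\mathbb{Z})}}\ \ge\ \left(\frac{2}{1+2n/\ell}\right)^{\ell}.$$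
   Context: Functions on $\{-n,\dots,n\}$ are regarded as functions on $\mathbb{Z}$ vanishing outside $\{-n,\dots,n\}$. The discrete derivative is $\nabla g(k)=g(k+1)-g(k)$ and $\nabla^{\ell}=\nabla(\nabla^{\ell-1})$. Convolution: $(u\ast f)(k)=\sum_{j\in\mathbb{Z}}u(j)f(k-j)$. $\mathbb{T}=\mathbb{R}/2\pi\mathbb{Z}$ and the Fourier transform is $\widehat{u}(\xi)=\sum_{k}u(k)e^{-ik\xi}$. The supremum is over nonzero (complex-valued) $f\in\ell^2(\mathbb{Z})$. *)

(* Defs.v *)
From Stdlib Require Import Reals ZArith Arith.
From Coquelicot Require Import Coquelicot.
Open Scope R_scope.

Definition zsum_win (n : nat) (F : Z -> C) : C :=
  sum_n (fun k : nat => F (Z.of_nat k - Z.of_nat n)%Z) (2 * n).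

(* Sum over all of Z of a real family (used for nonnegative families). *)
Definition zseries (a : Z -> R) : R :=
  Series (fun k : nat => a (Z.of_nat k)) + Series (fun k : nat => a (- Z.of_nat (S k))%Z).

Definition in_l2 (f : Z -> C) : Prop :=
  ex_series (fun k : nat => Cmod (f (Z.of_nat k)) ^ 2) /\
  ex_series (fun k : nat => Cmod (f (- Z.of_nat (S k))%Z) ^ 2).

Definition l2norm (f : Z -> C) : R := sqrt (zseries (fun k => Cmod (f k) ^ 2)).

Definition nabla (g : Z -> C) : Z -> C := fun k => Cminus (g (k + 1)%Z) (g k).
Definition nabla_pow (l : nat) (g : Z -> C) : Z -> C := Nat.iter l nabla g.

(* Convolution (u * f)(k) = sum_j u(j) f(k-j), for u vanishing outside {-n..n}
   (so the sum over Z reduces to the window {-n..n}). *)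
Definition conv (n : nat) (u : Z -> R) (f : Z -> C) : Z -> C :=
  fun k => zsum_win n (fun j => Cmult (RtoC (u j)) (f (k - j)%Z)).

Definition cexpi (t : R) : C := (cos t, sin t).

Definition fourier (n : nat) (u : Z -> R) (xi : R) : C :=
  zsum_win n (fun k => Cmult (RtoC (u k)) (cexpi (- IZR k * xi))).

Definition poly_eval (m : nat) (b : nat -> C) (z : C) : C :=
  sum_n (fun k => Cmult (b k) (pow_n z k)) m.

Definition op_sup (l n : nat) (u : Z -> R) : Rbar :=
  Lub_Rbar (fun r => exists f : Z -> C,
     in_l2 f /\ (exists k, f k <> RtoC 0) /\
     r = l2norm (nabla_pow l (conv n u f)) / l2norm f).

(* Main.v *)
Require Import Defs.
From Stdlib Require Import Reals ZArith Arith Lra Lia.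
From Coquelicot Require Import Coquelicot.
From mathcomp Require all_boot all_algebra zify ring lra complex Rstruct.
Open Scope R_scope.

Lemma C_eq (a b : C) : fst a = fst b -> snd a = snd b -> a = b.
Proof. destruct a, b; simpl; intros; subst; reflexivity. Qed.

Lemma cexpi_add a b : Cmult (cexpi a) (cexpi b) = cexpi (a + b).
Proof. unfold cexpi, Cmult; simpl. rewrite cos_plus, sin_plus. apply C_eq; simpl; ring. Qed.

Lemma cexpi_0 : cexpi 0 = RtoC 1.
Proof. unfold cexpi. rewrite cos_0, sin_0. reflexivity. Qed.

Lemma Cmod_cexpi t : Cmod (cexpi t) = 1.
Proof. unfold Cmod, cexpi; simpl.
  pose proof (sin2_cos2 t). unfold Rsqr in H.
  replace (cos t * (cos t * 1) + sin t * (sin t * 1)) with 1 by lra. apply sqrt_1. Qed.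

Lemma pow_cexpi t k : pow_n (cexpi t) k = cexpi (INR k * t).
Proof. induction k as [|k IH].
  - simpl. rewrite Rmult_0_l, cexpi_0. reflexivity.
  - simpl pow_n. rewrite IH. change (mult (cexpi t) (cexpi (INR k * t))) with (Cmult (cexpi t) (cexpi (INR k * t))).
    rewrite cexpi_add, S_INR. f_equal. ring. Qed.

Lemma cexpi_2PI_nat i : cexpi (2 * PI * INR i) = RtoC 1.
Proof. induction i as [|i IH].
  - simpl. rewrite Rmult_0_r. apply cexpi_0.
  - rewrite S_INR. replace (2 * PI * (INR i + 1)) with (2 * PI * INR i + 2 * PI) by ring.
    rewrite <- cexpi_add, IH. unfold cexpi. rewrite cos_2PI, sin_2PI.
    apply C_eq; simpl; ring. Qed.

Lemma cexpi_2PI_diff i j : cexpi (2 * PI * (INR i - INR j)) = RtoC 1.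
Proof.
  assert (H : Cmult (cexpi (2 * PI * (INR i - INR j))) (cexpi (2 * PI * INR j)) = RtoC 1).
  { rewrite cexpi_add. replace (2 * PI * (INR i - INR j) + 2 * PI * INR j) with (2 * PI * INR i) by ring.
    apply cexpi_2PI_nat. }
  rewrite cexpi_2PI_nat in H. rewrite <- H. apply C_eq; simpl; ring. Qed.

Lemma sum_n_const_C K (c : C) : sum_n (fun _ => c) K = Cmult (RtoC (INR (S K))) c.
Proof. induction K as [|K IH].
  - rewrite sum_O. apply C_eq; simpl; ring.
  - rewrite sum_Sn, IH. change (plus ?a ?b) with (Cplus a b).
    rewrite (S_INR (S K)). apply C_eq; simpl; ring. Qed.

Lemma geom_cexpi (al : R) K :
  Cmult (Cminus (cexpi al) (RtoC 1)) (sum_n (fun k => cexpi (INR k * al)) K)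
  = Cminus (cexpi (INR (S K) * al)) (RtoC 1).
Proof. induction K as [|K IH].
  - rewrite sum_O. simpl INR. rewrite Rmult_0_l, Rmult_1_l, cexpi_0. apply C_eq; simpl; ring.
  - rewrite sum_Sn. change (plus ?a ?b) with (Cplus a b).
    rewrite Cmult_plus_distr_l, IH.
    rewrite (S_INR (S K)).
    replace ((INR (S K) + 1) * al) with (al + INR (S K) * al) by ring.
    rewrite <- cexpi_add. ring. Qed.

Lemma C_integral (a g : C) : a <> RtoC 0 -> Cmult a g = RtoC 0 -> g = RtoC 0.
Proof. intros Ha H. rewrite <- (Cmult_1_l g). rewrite <- (Cinv_l a Ha).
  rewrite <- Cmult_assoc, H. ring. Qed.

Lemma sin_nonzero (x : R) : 0 < Rabs x < PI -> sin x <> 0.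
Proof. intros [H1 H2]. destruct (Rle_or_lt 0 x).
  - rewrite Rabs_right in * by lra. pose proof (sin_gt_0 x). lra.
  - rewrite Rabs_left in * by lra. pose proof (sin_gt_0 (-x)). rewrite sin_neg in H0. lra. Qed.

Definition theta (N k : nat) : R := (2 * INR k + 1) * PI / INR N.

Lemma S_sum (N i j : nat) : (0 < N)%nat -> (i < N)%nat -> (j < N)%nat ->
  sum_n (fun k => cexpi ((INR i - INR j) * theta N k)) (N - 1) =
  if Nat.eq_dec i j then RtoC (INR N) else RtoC 0.
Proof.
  intros HN Hi Hj. assert (HNr : 0 < INR N) by (apply lt_0_INR; lia).
  destruct (Nat.eq_dec i j) as [->|Hij].
  - rewrite (sum_n_ext _ (fun _ => RtoC 1)).
    + rewrite sum_n_const_C. replace (S (N - 1)) with N by lia. apply C_eq; simpl; ring.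
    + intros k. rewrite Rminus_diag, Rmult_0_l. apply cexpi_0.
  - set (x := INR i - INR j). set (al := 2 * x * PI / INR N).
    rewrite (sum_n_ext _ (fun k => Cmult (cexpi (x * PI / INR N)) (cexpi (INR k * al)))).
    2:{ intros k. rewrite cexpi_add. f_equal. unfold theta, al. field. lra. }
    change (sum_n (fun k => mult (cexpi (x * PI / INR N)) (cexpi (INR k * al))) (N - 1) = RtoC 0).
    rewrite sum_n_mult_l.
    assert (HG : sum_n (fun k => cexpi (INR k * al)) (N - 1) = RtoC 0).
    { apply (C_integral (Cminus (cexpi al) (RtoC 1))).
      - intros Heq. assert (Hc : cos al = 1).
        { apply (f_equal fst) in Heq. simpl in Heq. unfold cexpi in Heq. simpl in Heq. lra. }
        replace al with (2 * (x * PI / INR N)) in Hc by (unfold al; field; lra).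
        rewrite cos_2a_sin in Hc.
        assert (Hs : sin (x * PI / INR N) = 0) by nra.
        revert Hs. apply sin_nonzero.
        assert (Hx1 : 1 <= Rabs x).
        { unfold x. destruct (Nat.lt_total i j) as [Hl|[Hl|Hl]]; [|lia|].
          - rewrite Rabs_left. 2:{ apply Rlt_minus. apply lt_INR; lia. }
            assert (INR (S i) <= INR j) by (apply le_INR; lia). rewrite S_INR in H. lra.
          - rewrite Rabs_right. 2:{ apply Rle_ge. apply Rge_le. apply Rge_minus. apply Rle_ge, le_INR; lia. }
            assert (INR (S j) <= INR i) by (apply le_INR; lia). rewrite S_INR in H. lra. }
        assert (Hx2 : Rabs x < INR N).
        { unfold x. assert (INR i < INR N) by (apply lt_INR; lia). assert (INR j < INR N) by (apply lt_INR; lia).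
          pose proof (pos_INR i). pose proof (pos_INR j). apply Rabs_def1; lra. }
        rewrite Rabs_div by lra. rewrite Rabs_mult, (Rabs_right PI) by (pose proof PI_RGT_0; lra).
        rewrite (Rabs_right (INR N)) by lra. pose proof PI_RGT_0. split.
        + apply Rdiv_lt_0_compat; nra.
        + apply Rmult_lt_reg_r with (INR N); [lra|]. unfold Rdiv. rewrite Rmult_assoc, Rinv_l by lra. nra.
      - rewrite geom_cexpi. replace (S (N - 1)) with N by lia.
        replace (INR N * al) with (2 * PI * (INR i - INR j)) by (unfold al, x; field; lra).
        rewrite cexpi_2PI_diff. apply C_eq; simpl; ring. }
    match goal with |- mult ?a ?s = _ => transitivity (mult a (RtoC 0)); [f_equal; exact HG|] end.
    apply C_eq; simpl; ring.
Qed.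
Ltac Ceq := match goal with |- ?a = ?b => change (@eq C a b) end.

Lemma sum_n_Cmult_l (a : C) (f : nat -> C) K :
  sum_n (fun k => Cmult a (f k)) K = Cmult a (sum_n f K).
Proof. exact (@sum_n_mult_l C_Ring a f K). Qed.

Lemma sum_n_Cmult_r (a : C) (f : nat -> C) K :
  sum_n (fun k => Cmult (f k) a) K = Cmult (sum_n f K) a.
Proof. exact (@sum_n_mult_r C_Ring a f K). Qed.

Lemma sum_n_C_switch (u : nat -> nat -> C) m n :
  sum_n (fun i => sum_n (u i) n) m = sum_n (fun j => sum_n (fun i => u i j) m) n.
Proof. exact (@sum_n_switch C_AbelianMonoid u m n). Qed.

Lemma sum_delta (c : C) i K : (i <= K)%nat ->
  sum_n (fun j => if Nat.eq_dec i j then c else RtoC 0) K = c.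
Proof. induction K as [|K IH]; intros H.
  - rewrite sum_O. destruct (Nat.eq_dec i 0); [reflexivity|lia].
  - rewrite sum_Sn. change (plus ?a ?b) with (Cplus a b).
    destruct (Nat.eq_dec i (S K)) as [->|Hn].
    + rewrite (sum_n_ext_loc _ (fun _ => RtoC 0)).
      * rewrite sum_n_const_C. apply C_eq; simpl; ring.
      * intros j Hj. destruct (Nat.eq_dec (S K) j); [lia|reflexivity].
    + rewrite IH by lia. apply C_eq; simpl; ring.
Qed.

Definition zk (N k : nat) : C := cexpi (theta N k).
Definition wk (N k : nat) : C :=
  Cmult (RtoC (1/2)) (sum_n (fun j => cexpi (- INR j * theta N k)) (N - 1)).

Lemma step1 (N m : nat) (b : nat -> C) : (0 < N)%nat ->
  (forall i, (N <= i <= m)%nat -> b i = RtoC 0) ->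
  sum_n (fun k => Cmult (poly_eval m b (zk N k)) (wk N k)) (N - 1) =
  Cmult (RtoC (INR N / 2)) (poly_eval m b (cexpi 0)).
Proof.
  intros HN Hb. unfold poly_eval.
  rewrite (sum_n_ext _ (fun k => sum_n (fun i => Cmult (Cmult (b i) (pow_n (zk N k) i)) (wk N k)) m)).
  2:{ intros k. rewrite <- sum_n_Cmult_r. reflexivity. }
  rewrite sum_n_C_switch. rewrite <- sum_n_Cmult_l.
  apply sum_n_ext_loc. intros i Hi.
  rewrite pow_cexpi, Rmult_0_r, cexpi_0.
  rewrite (sum_n_ext _ (fun k => Cmult (Cmult (b i) (RtoC (1/2)))
       (sum_n (fun j => cexpi ((INR i - INR j) * theta N k)) (N - 1)))).
  2:{ intros k. unfold zk, wk. rewrite pow_cexpi.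
      transitivity (Cmult (Cmult (b i) (RtoC (1/2))) (Cmult (cexpi (INR i * theta N k)) (sum_n (fun j => cexpi (- INR j * theta N k)) (N - 1)))).
      - match goal with |- ?a = ?b => change (@eq C a b) end. ring.
      - f_equal. rewrite <- sum_n_Cmult_l. apply sum_n_ext. intros j. rewrite cexpi_add. f_equal. ring. }
  rewrite sum_n_Cmult_l. rewrite sum_n_C_switch.
  destruct (le_lt_dec N i) as [HiN|HiN].
  - rewrite Hb by lia. match goal with |- ?a = ?b => change (@eq C a b) end. ring.
  - rewrite (sum_n_ext_loc _ (fun j => if Nat.eq_dec i j then RtoC (INR N) else RtoC 0)).
    + rewrite sum_delta by lia. match goal with |- ?a = ?b => change (@eq C a b) end.
      apply C_eq; simpl; field.
    + intros j Hj. apply S_sum; lia.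
Qed.

Lemma cexpi_odd_PI k : cexpi (- ((2 * INR k + 1) * PI)) = RtoC (-1).
Proof.
  replace (- ((2 * INR k + 1) * PI)) with (- PI + 2 * PI * (INR 0 - INR k)) by (simpl; ring).
  rewrite <- cexpi_add, cexpi_2PI_diff. unfold cexpi.
  rewrite cos_neg, sin_neg, cos_PI, sin_PI. apply C_eq; simpl; ring. Qed.

Lemma telescope_C (g : nat -> C) K :
  sum_n (fun j => Cminus (g j) (g (S j))) K = Cminus (g 0%nat) (g (S K)).
Proof. induction K as [|K IH].
  - rewrite sum_O. reflexivity.
  - rewrite sum_Sn, IH. change (plus ?a ?b) with (Cplus a b). Ceq. ring. Qed.

Lemma step2 N k : (0 < N)%nat -> Cmult (wk N k) (Cminus (zk N k) (RtoC 1)) = zk N k.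
Proof.
  intros HN. unfold wk, zk.
  assert (HNr : 0 < INR N) by (apply lt_0_INR; lia).
  rewrite <- Cmult_assoc. rewrite <- sum_n_Cmult_r.
  rewrite (sum_n_ext _ (fun j => Cminus (cexpi ((1 - INR j) * theta N k)) (cexpi ((1 - INR (S j)) * theta N k)))).
  2:{ intros j. unfold Cminus. rewrite Cmult_plus_distr_l. rewrite cexpi_add. rewrite S_INR.
      replace (- INR j * theta N k + theta N k) with ((1 - INR j) * theta N k) by ring.
      replace ((1 - (INR j + 1)) * theta N k) with (- INR j * theta N k) by ring.
      f_equal. rewrite Cmult_comm. apply C_eq; simpl; ring. }
  rewrite telescope_C. replace (S (N - 1)) with N by lia.
  replace ((1 - INR N) * theta N k) with (theta N k + - ((2 * INR k + 1) * PI)) by (unfold theta; field; lra).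
  rewrite <- cexpi_add, cexpi_odd_PI.
  replace ((1 - INR 0) * theta N k) with (theta N k) by (simpl; ring).
  unfold cexpi; apply C_eq; simpl; field. Qed.

Lemma RtoC_sum (f : nat -> R) K : RtoC (sum_n f K) = sum_n (fun k => RtoC (f k)) K.
Proof. induction K as [|K IH].
  - rewrite !sum_O. reflexivity.
  - rewrite !sum_Sn, <- IH. change (@plus R_AbelianMonoid ?a ?b) with (Rplus a b).
    change (@plus C_AbelianMonoid ?a ?b) with (Cplus a b). apply C_eq; simpl; ring. Qed.

Lemma Cconj_sum (f : nat -> C) K : Cconj (sum_n f K) = sum_n (fun k => Cconj (f k)) K.
Proof. induction K as [|K IH].
  - rewrite !sum_O. reflexivity.
  - rewrite !sum_Sn, <- IH. change (@plus C_AbelianMonoid ?a ?b) with (Cplus a b). apply C_eq; simpl; ring. Qed.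

Lemma Cconj_cexpi t : Cconj (cexpi t) = cexpi (- t).
Proof. unfold cexpi, Cconj. rewrite cos_neg, sin_neg. reflexivity. Qed.

Lemma step3 N : (0 < N)%nat ->
  sum_n (fun k => Cmod (wk N k) ^ 2) (N - 1) = INR N ^ 2 / 4.
Proof.
  intros HN.
  assert (H : RtoC (sum_n (fun k => Cmod (wk N k) ^ 2) (N - 1)) = RtoC (INR N ^ 2 / 4)).
  2:{ apply (f_equal fst) in H. exact H. }
  rewrite RtoC_sum.
  rewrite (sum_n_ext _ (fun k => Cmult (RtoC (1/4)) (sum_n (fun j => sum_n (fun j' => cexpi ((INR j' - INR j) * theta N k)) (N - 1)) (N - 1)))).
  2:{ intros k. rewrite Cmod2_conj. unfold wk. rewrite Cmult_conj, Cconj_sum.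
      rewrite (sum_n_ext (fun j => Cconj _) (fun j => cexpi (INR j * theta N k))).
      2:{ intros j. rewrite Cconj_cexpi. f_equal. ring. }
      transitivity (Cmult (Cmult (RtoC (1/2)) (Cconj (RtoC (1/2))))
         (Cmult (sum_n (fun j => cexpi (- INR j * theta N k)) (N - 1)) (sum_n (fun j => cexpi (INR j * theta N k)) (N - 1)))).
      - match goal with |- ?a = ?b => change (@eq C a b) end. ring.
      - f_equal. { apply C_eq; simpl; field. }
        rewrite <- sum_n_Cmult_r. apply sum_n_ext. intros j.
        rewrite <- sum_n_Cmult_l. apply sum_n_ext. intros j'.
        rewrite cexpi_add. f_equal. ring. }
  rewrite sum_n_Cmult_l. rewrite sum_n_C_switch.
  rewrite (sum_n_ext_loc _ (fun j => RtoC (INR N))).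
  2:{ intros j Hj. rewrite sum_n_C_switch.
      rewrite (sum_n_ext_loc _ (fun j' => if Nat.eq_dec j' j then RtoC (INR N) else RtoC 0)).
      - rewrite (sum_n_ext _ (fun j' => if Nat.eq_dec j j' then RtoC (INR N) else RtoC 0)).
        + apply sum_delta. exact Hj.
        + intros j'. destruct (Nat.eq_dec j' j), (Nat.eq_dec j j'); subst; congruence.
      - intros j' Hj'. apply S_sum; lia. }
  rewrite sum_n_const_C. replace (S (N - 1)) with N by lia. apply C_eq; simpl; field.
Qed.

Lemma Cmod_sum_le (f : nat -> C) K : Cmod (sum_n f K) <= sum_n (fun k => Cmod (f k)) K.
Proof. induction K as [|K IH].
  - rewrite !sum_O. lra.
  - rewrite !sum_Sn. change (@plus C_AbelianMonoid ?a ?b) with (Cplus a b).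
    change (@plus R_AbelianMonoid ?a ?b) with (Rplus a b).
    eapply Rle_trans; [apply Cmod_triangle|]. lra. Qed.

Lemma sum_n_R_lt (f g : nat -> R) K : (forall k, (k <= K)%nat -> f k < g k) ->
  sum_n f K < sum_n g K.
Proof. induction K as [|K IH]; intros H.
  - rewrite !sum_O. apply H; lia.
  - rewrite !sum_Sn. change (@plus R_AbelianMonoid ?a ?b) with (Rplus a b).
    assert (sum_n f K < sum_n g K) by (apply IH; intros; apply H; lia).
    assert (f (S K) < g (S K)) by (apply H; lia). lra. Qed.

Lemma sum_n_R_scal (c : R) (f : nat -> R) K : sum_n (fun k => c * f k) K = c * sum_n f K.
Proof. exact (@sum_n_mult_l R_Ring c f K). Qed.

Lemma B3 (N m : nat) (b : nat -> C) : (0 < N)%nat ->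
  (forall i, (N <= i <= m)%nat -> b i = RtoC 0) ->
  Cmod (poly_eval m b (cexpi 0)) = 1 ->
  exists t, 2 / INR N <= Cmod (Cminus (cexpi t) (RtoC 1)) * Cmod (poly_eval m b (cexpi t)).
Proof.
  intros HN Hb HQ1.
  assert (HNr : 0 < INR N) by (apply lt_0_INR; lia).
  destruct (Classical_Prop.classic (exists t, 2 / INR N <= Cmod (Cminus (cexpi t) (RtoC 1)) * Cmod (poly_eval m b (cexpi t)))) as [E|NE]; [exact E|].
  exfalso.
  assert (Hlt : forall t, Cmod (Cminus (cexpi t) (RtoC 1)) * Cmod (poly_eval m b (cexpi t)) < 2 / INR N).
  { intros t. apply Rnot_le_lt. intros Hle. apply NE. exists t. exact Hle. }
  pose proof (step1 N m b HN Hb) as E1.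
  apply (f_equal Cmod) in E1. rewrite Cmod_mult, HQ1, Cmod_R, Rabs_right in E1 by (apply Rle_ge, Rlt_le, Rdiv_lt_0_compat; lra).
  rewrite Rmult_1_r in E1.
  assert (Hw : forall k, Cmod (wk N k) * Cmod (Cminus (zk N k) (RtoC 1)) = 1).
  { intros k. rewrite <- Cmod_mult, step2 by exact HN. apply Cmod_cexpi. }
  assert (Hle := Cmod_sum_le (fun k => Cmult (poly_eval m b (zk N k)) (wk N k)) (N - 1)).
  rewrite E1 in Hle.
  assert (Hlt2 : sum_n (fun k => Cmod (Cmult (poly_eval m b (zk N k)) (wk N k))) (N - 1)
                 < sum_n (fun k => 2 / INR N * Cmod (wk N k) ^ 2) (N - 1)).
  { apply sum_n_R_lt. intros k Hk. rewrite Cmod_mult.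
    specialize (Hw k). specialize (Hlt (theta N k)). fold (zk N k) in Hlt.
    assert (Hpos : 0 < Cmod (wk N k)).
    { pose proof (Cmod_ge_0 (wk N k)). destruct (Req_dec (Cmod (wk N k)) 0) as [Z|Z]; [rewrite Z in Hw; lra|lra]. }
    replace (Cmod (poly_eval m b (zk N k)) * Cmod (wk N k)) with
      ((Cmod (Cminus (zk N k) (RtoC 1)) * Cmod (poly_eval m b (zk N k))) * Cmod (wk N k) ^ 2).
    2:{ replace (Cmod (wk N k) ^ 2) with (Cmod (wk N k) * Cmod (wk N k)) by ring.
        transitivity (Cmod (poly_eval m b (zk N k)) * Cmod (wk N k) * (Cmod (wk N k) * Cmod (Cminus (zk N k) 1))); [ring|].
        rewrite Hw. ring. }
    apply Rmult_lt_compat_r; [nra|exact Hlt]. }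
  rewrite sum_n_R_scal, step3 in Hlt2 by exact HN.
  replace (2 / INR N * (INR N ^ 2 / 4)) with (INR N / 2) in Hlt2 by (field; lra).
  lra.
Qed.

Lemma sum_n_stable (a : nat -> R) K p : (forall k, (K < k)%nat -> a k = 0) ->
  sum_n a (K + p) = sum_n a K.
Proof. intros H. induction p as [|p IH].
  - rewrite Nat.add_0_r. reflexivity.
  - rewrite Nat.add_succ_r, sum_Sn, IH, H by lia.
    change (@plus R_AbelianMonoid ?a ?b) with (Rplus a b). apply Rplus_0_r. Qed.

Lemma is_series_finite (a : nat -> R) K : (forall k, (K < k)%nat -> a k = 0) ->
  is_series a (sum_n a K).
Proof. intros H. unfold is_series.
  apply filterlim_ext_loc with (fun _ => sum_n a K).
  - exists K. intros n Hn. replace n with (K + (n - K))%nat by lia. symmetry. apply sum_n_stable, H.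
  - apply filterlim_const. Qed.

Lemma Series_finite (a : nat -> R) K : (forall k, (K < k)%nat -> a k = 0) ->
  ex_series a /\ Series a = sum_n a K.
Proof. intros H. split.
  - eexists. apply is_series_finite, H.
  - apply is_series_unique, is_series_finite, H. Qed.

Lemma sum_n_lower (a : nat -> R) (v : R) K : forall K', (K' <= K)%nat ->
  (forall k, (k <= K)%nat -> 0 <= a k) -> (forall k, (k <= K')%nat -> v <= a k) ->
  INR (S K') * v <= sum_n a K.
Proof. induction K as [|K IH]; intros K' HK Hpos Hv.
  - replace K' with 0%nat by lia. rewrite sum_O. simpl. specialize (Hv 0%nat ltac:(lia)). lra.
  - rewrite sum_Sn. change (@plus R_AbelianMonoid ?a ?b) with (Rplus a b).
    destruct (Nat.eq_dec K' (S K)) as [->|Hne].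
    + assert (INR (S K) * v <= sum_n a K) by (apply IH; intros; auto; try lia; apply Hpos; lia || apply Hv; lia).
      rewrite (S_INR (S K)). specialize (Hv (S K) (le_n _)). lra.
    + assert (INR (S K') * v <= sum_n a K) by (apply IH; intros; try lia; [apply Hpos; lia| apply Hv; lia]).
      specialize (Hpos (S K) (le_n _)). lra.
Qed.

Lemma sum_n_upper (a : nat -> R) K : (forall k, (k <= K)%nat -> a k <= 1) ->
  sum_n a K <= INR (S K).
Proof. induction K as [|K IH]; intros H.
  - rewrite sum_O. simpl. specialize (H 0%nat (le_n 0)). lra.
  - rewrite sum_Sn. change (@plus R_AbelianMonoid ?a ?b) with (Rplus a b).
    rewrite (S_INR (S K)). assert (sum_n a K <= INR (S K)) by (apply IH; intros; apply H; lia).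
    specialize (H (S K) (le_n _)). lra. Qed.

Definition ftest (N : nat) (xi : R) (k : Z) : C :=
  if (Z.abs k <=? Z.of_nat N)%Z then cexpi (IZR k * xi) else RtoC 0.

Lemma ftest_out N xi k : (Z.abs k > Z.of_nat N)%Z -> ftest N xi k = RtoC 0.
Proof. intros H. unfold ftest. destruct (Z.leb_spec (Z.abs k) (Z.of_nat N)); [lia|reflexivity]. Qed.

Lemma ftest_in N xi k : (Z.abs k <= Z.of_nat N)%Z -> ftest N xi k = cexpi (IZR k * xi).
Proof. intros H. unfold ftest. destruct (Z.leb_spec (Z.abs k) (Z.of_nat N)); [reflexivity|lia]. Qed.

Lemma sum_n_zero_C (f : nat -> C) K : (forall k, (k <= K)%nat -> f k = RtoC 0) -> sum_n f K = RtoC 0.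
Proof. intros H. rewrite (sum_n_ext_loc _ (fun _ => RtoC 0)) by exact H.
  rewrite sum_n_const_C. apply C_eq; simpl; ring. Qed.

Lemma conv_out N n u xi k : (Z.abs k > Z.of_nat N + Z.of_nat n)%Z -> conv n u (ftest N xi) k = RtoC 0.
Proof. intros H. unfold conv, zsum_win. apply sum_n_zero_C. intros i Hi.
  rewrite ftest_out by lia. apply C_eq; simpl; ring. Qed.

Lemma conv_in N n u xi k : (Z.of_nat n - Z.of_nat N <= k <= Z.of_nat N - Z.of_nat n)%Z ->
  conv n u (ftest N xi) k = Cmult (cexpi (IZR k * xi)) (fourier n u xi).
Proof. intros H. unfold conv, fourier, zsum_win. rewrite <- sum_n_Cmult_l.
  apply sum_n_ext_loc. intros i Hi. rewrite ftest_in by lia.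
  rewrite minus_IZR. rewrite Cmult_assoc, (Cmult_comm (cexpi _)), <- Cmult_assoc, cexpi_add.
  f_equal. f_equal. ring. Qed.

Lemma nabla_pow_S j g : nabla_pow (S j) g = nabla (nabla_pow j g).
Proof. reflexivity. Qed.

Lemma nabla_out N n u xi j k : ((k > Z.of_nat N + Z.of_nat n) \/ (k + Z.of_nat j < - (Z.of_nat N + Z.of_nat n)))%Z ->
  nabla_pow j (conv n u (ftest N xi)) k = RtoC 0.
Proof. revert k. induction j as [|j IH]; intros k H.
  - simpl. apply conv_out. lia.
  - rewrite nabla_pow_S. unfold nabla. rewrite !IH by lia. apply C_eq; simpl; ring. Qed.

Lemma nabla_in N n u xi j k : (Z.of_nat n - Z.of_nat N <= k)%Z -> (k + Z.of_nat j <= Z.of_nat N - Z.of_nat n)%Z ->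
  nabla_pow j (conv n u (ftest N xi)) k =
  Cmult (cexpi (IZR k * xi)) (Cmult (pow_n (Cminus (cexpi xi) (RtoC 1)) j) (fourier n u xi)).
Proof. revert k. induction j as [|j IH]; intros k H1 H2.
  - simpl. rewrite conv_in by lia. f_equal. change (one : C) with (RtoC 1). ring.
  - rewrite nabla_pow_S. unfold nabla. rewrite !IH by lia. simpl pow_n.
    change (mult ?a ?b) with (Cmult a b). rewrite plus_IZR.
    replace ((IZR k + 1) * xi) with (xi + IZR k * xi) by ring. rewrite <- cexpi_add. ring. Qed.

Lemma ftest_mod_le N xi k : Cmod (ftest N xi k) ^ 2 <= 1.
Proof. unfold ftest. destruct (Z.abs k <=? Z.of_nat N)%Z.
  - rewrite Cmod_cexpi. lra.
  - rewrite Cmod_0. lra. Qed.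

Lemma ratio_bound (l n : nat) (u : Z -> R) (xi : R) (M : nat) :
  let N := (M + 1 + n + l)%nat in
  let c2 := Cmod (Cmult (pow_n (Cminus (cexpi xi) (RtoC 1)) l) (fourier n u xi)) ^ 2 in
  exists r, (exists f : Z -> C, in_l2 f /\ (exists k, f k <> RtoC 0) /\
     r = l2norm (nabla_pow l (conv n u f)) / l2norm f) /\
     0 <= r /\ c2 * INR (2 * M + 3) <= r ^ 2 * (2 * INR N + 2).
Proof.
  intros N c2. set (f := ftest N xi). set (h := nabla_pow l (conv n u f)).
  destruct (Series_finite (fun k => Cmod (f (Z.of_nat k)) ^ 2) N) as [Ef1 Sf1].
  { intros k Hk. unfold f. rewrite ftest_out by lia. rewrite Cmod_0. ring. }
  destruct (Series_finite (fun k => Cmod (f (- Z.of_nat (S k))%Z) ^ 2) N) as [Ef2 Sf2].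
  { intros k Hk. unfold f. rewrite ftest_out by lia. rewrite Cmod_0. ring. }
  destruct (Series_finite (fun k => Cmod (h (Z.of_nat k)) ^ 2) (N + n)) as [Eh1 Sh1].
  { intros k Hk. unfold h, f. rewrite nabla_out by lia. rewrite Cmod_0. ring. }
  destruct (Series_finite (fun k => Cmod (h (- Z.of_nat (S k))%Z) ^ 2) (N + n + l)) as [Eh2 Sh2].
  { intros k Hk. unfold h, f. rewrite nabla_out by lia. rewrite Cmod_0. ring. }
  set (Zf := zseries (fun k => Cmod (f k) ^ 2)).
  set (Zh := zseries (fun k => Cmod (h k) ^ 2)).
  assert (HZf1 : 1 <= Zf).
  { unfold Zf, zseries. rewrite Sf1, Sf2.
    assert (A : INR (S 0) * 1 <= sum_n (fun k => Cmod (f (Z.of_nat k)) ^ 2) N).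
    { apply sum_n_lower; [lia| intros; apply pow2_ge_0 |].
      intros k Hk. replace k with 0%nat by lia. unfold f. rewrite ftest_in by lia. rewrite Cmod_cexpi. lra. }
    assert (B : 0 <= sum_n (fun k => Cmod (f (- Z.of_nat (S k))%Z) ^ 2) N).
    { rewrite <- (Rmult_0_r (INR (S 0))). apply sum_n_lower; [lia| intros; apply pow2_ge_0 | intros; apply pow2_ge_0]. }
    change (INR (S 0)) with 1 in A. lra. }
  assert (HZf2 : Zf <= 2 * INR N + 2).
  { unfold Zf, zseries. rewrite Sf1, Sf2.
    assert (A := sum_n_upper (fun k => Cmod (f (Z.of_nat k)) ^ 2) N (fun k _ => ftest_mod_le _ _ _)).
    assert (B := sum_n_upper (fun k => Cmod (f (- Z.of_nat (S k))%Z) ^ 2) N (fun k _ => ftest_mod_le _ _ _)).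
    rewrite S_INR in A, B. lra. }
  assert (Hc : forall k, (Z.of_nat n - Z.of_nat N <= k)%Z -> (k + Z.of_nat l <= Z.of_nat N - Z.of_nat n)%Z ->
     Cmod (h k) ^ 2 = c2).
  { intros k H1 H2. unfold h, f. rewrite nabla_in by assumption. rewrite Cmod_mult, Cmod_cexpi, Rmult_1_l. reflexivity. }
  assert (HZh : c2 * INR (2 * M + 3) <= Zh).
  { unfold Zh, zseries. rewrite Sh1, Sh2.
    assert (A : INR (S (S M)) * c2 <= sum_n (fun k => Cmod (h (Z.of_nat k)) ^ 2) (N + n)).
    { apply sum_n_lower; [unfold N; lia| intros; apply pow2_ge_0 |].
      intros k Hk. rewrite Hc by (unfold N; lia). lra. }
    assert (B : INR (S M) * c2 <= sum_n (fun k => Cmod (h (- Z.of_nat (S k))%Z) ^ 2) (N + n + l)).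
    { apply sum_n_lower; [unfold N; lia| intros; apply pow2_ge_0 |].
      intros k Hk. rewrite Hc by (unfold N; lia). lra. }
    replace (2 * M + 3)%nat with (S (S M) + S M)%nat by lia. rewrite plus_INR. lra. }
  assert (HZh0 : 0 <= Zh).
  { unfold Zh, zseries. rewrite Sh1, Sh2.
    assert (A : INR (S 0) * 0 <= sum_n (fun k => Cmod (h (Z.of_nat k)) ^ 2) (N + n)).
    { apply sum_n_lower; [lia| intros; apply pow2_ge_0 | intros; apply pow2_ge_0]. }
    assert (B : INR (S 0) * 0 <= sum_n (fun k => Cmod (h (- Z.of_nat (S k))%Z) ^ 2) (N + n + l)).
    { apply sum_n_lower; [lia| intros; apply pow2_ge_0 | intros; apply pow2_ge_0]. }
    lra. }
  exists (sqrt Zh / sqrt Zf). split; [|split].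
  - exists f. split; [split; assumption|]. split.
    + exists 0%Z. unfold f. rewrite ftest_in by lia. rewrite Rmult_0_l, cexpi_0.
      intros E. apply (f_equal fst) in E. simpl in E. lra.
    + reflexivity.
  - apply Rdiv_le_0_compat; [apply sqrt_pos| apply sqrt_lt_R0; lra].
  - assert (Hsq : (sqrt Zh / sqrt Zf) ^ 2 = Zh / Zf).
    { unfold Rdiv. rewrite Rpow_mult_distr, <- Rinv_pow by (apply Rgt_not_eq, sqrt_lt_R0; lra).
      simpl. rewrite !Rmult_1_r, !sqrt_sqrt by lra. reflexivity. }
    rewrite Hsq. unfold Rdiv. 
    apply Rle_trans with Zh; [exact HZh|].
    assert (0 <= c2) by apply pow2_ge_0.
    replace Zh with (Zh * / Zf * Zf) at 1 by (field; lra).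
    apply Rmult_le_compat_l; [| exact HZf2].
    apply Rmult_le_pos; [lra| apply Rlt_le, Rinv_0_lt_compat; lra].
Qed.

Lemma partA (l n : nat) (u : Z -> R) (xi T : R) : 0 <= T ->
  T <= Cmod (Cmult (pow_n (Cminus (cexpi xi) (RtoC 1)) l) (fourier n u xi)) ->
  Rbar_le (Finite T) (op_sup l n u).
Proof.
  intros HT0 HT.
  set (c := Cmod (Cmult (pow_n (Cminus (cexpi xi) (RtoC 1)) l) (fourier n u xi))) in *.
  destruct (Lub_Rbar_correct (fun r => exists f : Z -> C, in_l2 f /\ (exists k, f k <> RtoC 0) /\
     r = l2norm (nabla_pow l (conv n u f)) / l2norm f)) as [Hub _].
  unfold op_sup. 
  set (L := Lub_Rbar _) in *.
  assert (Hall : forall M : nat, exists r, Rbar_le (Finite r) L /\ 0 <= r /\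
            c ^ 2 * INR (2 * M + 3) <= r ^ 2 * (2 * INR (M + 1 + n + l) + 2)).
  { intros M. destruct (ratio_bound l n u xi M) as [r [Er [Hr0 Hr]]].
    exists r. split; [apply Hub, Er| split; assumption]. }
  destruct L as [x| |] eqn:HL.
  - simpl. destruct (Rle_or_lt T x) as [H|H]; [exact H|exfalso].
    set (K := INR (n + l)).
    assert (HK : 0 <= K) by apply pos_INR.
    assert (Hx0 : 0 <= x).
    { destruct (Hall 0%nat) as [r [Hr [Hr0 _]]]. simpl in Hr. lra. }
    assert (Hgap : 0 < T ^ 2 - x ^ 2) by nra.
    destruct (archimed (x ^ 2 * (2 * K + 1) / (T ^ 2 - x ^ 2))) as [Hup _].
    set (M := Z.to_nat (up (x ^ 2 * (2 * K + 1) / (T ^ 2 - x ^ 2)))).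
    assert (HM : x ^ 2 * (2 * K + 1) / (T ^ 2 - x ^ 2) < INR M).
    { unfold M. destruct (Z_lt_le_dec (up (x ^ 2 * (2 * K + 1) / (T ^ 2 - x ^ 2))) 0) as [Hz|Hz].
      - assert (IZR (up (x ^ 2 * (2 * K + 1) / (T ^ 2 - x ^ 2))) < 0) by (apply IZR_lt; lia).
        assert (0 <= x ^ 2 * (2 * K + 1) / (T ^ 2 - x ^ 2)).
        { apply Rdiv_le_0_compat; [apply Rmult_le_pos; [apply pow2_ge_0| lra]|lra]. }
        lra.
      - rewrite INR_IZR_INZ, Z2Nat.id by lia. lra. }
    destruct (Hall M) as [r [Hr [Hr0 Hr2]]]. simpl in Hr.
    assert (Er : INR (M + 1 + n + l) = INR M + 1 + K) by (unfold K; rewrite !plus_INR; simpl; ring).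
    assert (Em : INR (2 * M + 3) = 2 * INR M + 3) by (rewrite plus_INR, mult_INR; simpl; ring).
    rewrite Er, Em in Hr2.
    assert (r ^ 2 <= x ^ 2) by nra.
    assert (T ^ 2 <= c ^ 2) by nra.
    assert (HM2 : x ^ 2 * (2 * K + 1) < INR M * (T ^ 2 - x ^ 2)).
    { replace (x ^ 2 * (2 * K + 1)) with (x ^ 2 * (2 * K + 1) / (T ^ 2 - x ^ 2) * (T ^ 2 - x ^ 2)) by (field; lra).
      apply Rmult_lt_compat_r; lra. }
    assert (HM0 : 0 <= INR M) by apply pos_INR.
    assert (T ^ 2 * (2 * INR M + 3) <= x ^ 2 * (2 * (INR M + 1 + K) + 2)).
    { apply Rle_trans with (c ^ 2 * (2 * INR M + 3)); [apply Rmult_le_compat_r; lra|].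
      apply Rle_trans with (r ^ 2 * (2 * (INR M + 1 + K) + 2)); [exact Hr2|].
      apply Rmult_le_compat_r; lra. }
    nra.
  - simpl. exact I.
  - destruct (Hall 0%nat) as [r [Hr _]]. simpl in Hr. exact (False_ind _ Hr).
Qed.

Lemma tpt_bound K k : (k < K)%nat -> 0 <= INR k / INR K <= PI.
Proof. intros H. assert (0 < INR K) by (apply lt_0_INR; lia).
  assert (INR k < INR K) by (apply lt_INR; lia). pose proof (pos_INR k).
  pose proof PI2_1. pose proof PI2_Rlt_PI. split.
  - apply Rdiv_le_0_compat; lra.
  - apply Rle_trans with 1; [|lra]. apply Rmult_le_reg_r with (INR K); [lra|].
    unfold Rdiv. rewrite Rmult_assoc, Rinv_l by lra. lra. Qed.

Lemma tpt_inj K i j : (i < K)%nat -> (j < K)%nat -> cos (INR i / INR K) = cos (INR j / INR K) -> i = j.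
Proof. intros Hi Hj E. apply cos_inj in E; try (apply tpt_bound; assumption).
  assert (0 < INR K) by (apply lt_0_INR; lia). apply INR_eq.
  apply (f_equal (fun x => x * INR K)) in E. unfold Rdiv in E. rewrite !Rmult_assoc, Rinv_l, !Rmult_1_r in E by lra.
  exact E. Qed.

Module MC.
Import all_boot all_algebra zify ring.
Import complex Rstruct.
Import GRing.Theory.
Local Open Scope ring_scope.

Definition phi (z : C) : R[i] := Complex (fst z) (snd z).

Lemma phiM a b : phi (Cmult a b) = phi a * phi b.
Proof. by case: a b => [a1 a2] [b1 b2]. Qed.

Lemma phiD a b : phi (Cplus a b) = phi a + phi b.
Proof. by case: a b => [a1 a2] [b1 b2]. Qed.

Lemma phi1 : phi (RtoC 1) = 1.
Proof. by []. Qed.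

Lemma B2_alg (K : fieldType) (s q n d : nat) (a c v : nat -> K) (pts : seq (K * K)) :
  (0 < s)%N -> n = (s * q)%N -> (q < d)%N -> a d != 0 -> c 0%N != 0 ->
  (forall w w', (w, w') \in pts -> w * w' = 1 /\
     ((\sum_(i < d.+1) a i * w ^+ i) * (\sum_(i < d.+1) c i * w' ^+ i)) ^+ s =
     w' ^+ n * \sum_(i < (2 * n).+1) v i * w ^+ i) ->
  uniq (map fst pts) -> (2 * d * s < size pts)%N -> False.
Proof.
  move=> s0 En qd ad c0 Hpts Hu Hsz.
  pose qp : {poly K} := \poly_(i < d.+1) a i.
  pose qr : {poly K} := \poly_(i < d.+1) c (d - i)%N.
  pose wp : {poly K} := \poly_(i < (2 * n).+1) v i.
  pose B := (qp * qr) ^+ s - 'X^(d * s - n) * wp.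
  have nsd : (n < d * s)%N by rewrite En; nia.
  have szqp : size qp = d.+1 by rewrite size_poly_eq.
  have szqr : size qr = d.+1 by rewrite size_poly_eq //= subnn.
  have qp0 : qp != 0 by rewrite -size_poly_eq0 szqp.
  have qr0 : qr != 0 by rewrite -size_poly_eq0 szqr.
  have szA : size ((qp * qr) ^+ s) = (2 * d * s).+1.
  { have := size_exp (qp * qr) s. rewrite size_mul // szqp szqr.
    have : (size ((qp * qr) ^+ s) != 0)%N.
    { rewrite size_poly_eq0 expf_neq0 // mulf_neq0 //. }
    case: (size _) => [//|k] _ /= ->. congr (_.+1). lia. }
  have szW : (size ('X^(d * s - n) * wp)%R < (2 * d * s).+1)%N.
  { apply: (leq_ltn_trans (@size_polyMleq _ _ _)). rewrite size_polyXn.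
    have hw : (size wp <= (2 * n).+1)%N by apply: size_poly.
    rewrite addSn /=. apply: (leq_ltn_trans (leq_add (leqnn _) hw)). lia. }
  have szB : size B = (2 * d * s).+1.
  { rewrite /B size_polyDl; first exact: szA.
    have -> : size (- ('X^(d * s - n) * wp)) = size ('X^(d * s - n) * wp) by apply: size_polyN.
    by move: szW; rewrite -szA. }
  have B0 : B != 0 by rewrite -size_poly_eq0 szB.
  have := max_poly_roots B0 _ Hu. rewrite size_map szB.
  move=> H; suff : (size pts < (2 * d * s).+1)%N by rewrite ltnS leqNgt Hsz.
  apply: H. apply/allP => w /mapP [[w1 w2] Hin /= ->].
  have [ww' E] := Hpts _ _ Hin.
  rewrite /root /B hornerD hornerN hornerM hornerXn horner_exp hornerM !horner_poly.
  have Hr : \sum_(i < d.+1) c (d - i)%N * w1 ^+ i = w1 ^+ d * \sum_(i < d.+1) c i * w2 ^+ i.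
  { rewrite big_distrr (reindex_inj rev_ord_inj) /=; apply: eq_bigr => i _.
    have hi : (i <= d)%N by rewrite -ltnS.
    rewrite subSS subKn //.
    have -> : w1 ^+ d = w1 ^+ (d - i) * w1 ^+ i by rewrite -exprD subnK.
    transitivity (c i * w1 ^+ (d - i) * (w1 ^+ i * w2 ^+ i)); last by ring.
    by rewrite -exprMn ww' expr1n mulr1. }
  rewrite Hr.
  set A := \sum_(i < d.+1) a i * w1 ^+ i.
  set C := \sum_(i < d.+1) c i * w2 ^+ i.
  set W := \sum_(i < (2 * n).+1) v i * w1 ^+ i.
  have {}E : (A * C) ^+ s = w2 ^+ n * W by exact: E.
  have -> : (A * (w1 ^+ d * C)) ^+ s = (w1 ^+ d) ^+ s * (A * C) ^+ s.
  { rewrite -exprMn_comm; last exact: mulrC. congr (_ ^+ _); ring. }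
  rewrite E subr_eq0; apply/eqP.
  have -> : (w1 ^+ d) ^+ s = w1 ^+ (d * s - n) * w1 ^+ n by rewrite -exprM -exprD subnK // ltnW.
  transitivity (w1 ^+ (d * s - n) * ((w1 * w2) ^+ n) * W); first by rewrite exprMn_comm; [ring|exact: mulrC].
  by rewrite ww' expr1n mulr1.
Qed.


Lemma phi_sum (f : nat -> C) K : phi (sum_n f K) = \sum_(i < K.+1) phi (f i).
Proof.
  elim: K => [|K IH]; first by rewrite sum_O big_ord_recr big_ord0 /= add0r.
  by rewrite sum_Sn phiD IH [in RHS]big_ord_recr.
Qed.

Lemma phi_pow z k : phi (pow_n z k) = phi z ^+ k.
Proof. elim: k => [|k IH] //=. by rewrite exprS -IH -phiM. Qed.

Lemma phi0 z : phi z = 0 -> z = RtoC 0.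
Proof. case: z => a b /= [-> ->]. by []. Qed.

Lemma phi_sum_mul (f : nat -> C) z K :
  phi (sum_n (fun j => Cmult (f j) (pow_n z j)) K) = \sum_(j < K.+1) phi (f j) * phi z ^+ j.
Proof. rewrite phi_sum; apply: eq_bigr => j _. by rewrite phiM phi_pow. Qed.

Definition tpt (K i : nat) : R := Rdiv (INR i) (INR K).

Lemma B2_C (s q n d : nat) (u : Z -> R) (b : nat -> C) :
  lt 0 s -> n = Nat.mul s q -> lt q d -> b d <> RtoC 0 -> b O <> RtoC 0 ->
  (forall xi, pow_n (Cmult (sum_n (fun i => Cmult (Cconj (b i)) (pow_n (cexpi xi) i)) d)
                           (sum_n (fun i => Cmult (b i) (pow_n (cexpi (Ropp xi)) i)) d)) s
             = Cmult (pow_n (cexpi (Ropp xi)) n)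
                     (sum_n (fun i => Cmult (RtoC (u (Z.sub (Z.of_nat i) (Z.of_nat n)))) (pow_n (cexpi xi) i)) (Nat.mul 2 n))) ->
  False.
Proof.
  move=> /ltP s0 En /ltP qd bd b0 H.
  pose K := (2 * d * s).+1.
  pose pts := [seq (phi (cexpi (tpt K i)), phi (cexpi (Ropp (tpt K i)))) | i <- iota 0 K].
  apply: (@B2_alg _ s q n d (fun i => phi (Cconj (b i))) (fun i => phi (b i))
           (fun i => phi (RtoC (u (Z.sub (Z.of_nat i) (Z.of_nat n))))) pts).
  - exact: s0.
  - rewrite En. lia.
  - exact: qd.
  - apply/eqP => /phi0 E. apply: bd. by rewrite -(Cconj_conj (b d)) E /Cconj /= Ropp_0.
  - by apply/eqP => /phi0.
  - move=> w w' /mapP [i Hi [-> ->]]. split.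
    + by rewrite -phiM cexpi_add Rplus_opp_r cexpi_0 phi1.
    + have E1 := congr1 phi (H (tpt K i)).
      rewrite phi_pow phiM !phi_sum_mul phiM phi_pow in E1.
      have -> : (2 * n)%N = Nat.mul 2 n by [].
      rewrite (phi_sum_mul (fun i0 => RtoC (u (Z.sub (Z.of_nat i0) (Z.of_nat n))))) in E1. exact: E1.
  - rewrite -map_comp. rewrite map_inj_in_uniq ?iota_uniq //.
    move=> i j; rewrite !mem_iota /= !add0n => Hi Hj E.
    have Ec := congr1 (@Re _) E. rewrite /= in Ec.
    apply: (tpt_inj K); [exact/ltP|exact/ltP|exact: Ec].
  - by rewrite size_map size_iota.
Qed.

End MC.


Lemma sum_n_trunc (f : nat -> C) d p : (forall j, (d < j <= d + p)%nat -> f j = RtoC 0) ->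
  sum_n f (d + p) = sum_n f d.
Proof. induction p as [|p IH]; intros H.
  - rewrite Nat.add_0_r. reflexivity.
  - rewrite Nat.add_succ_r, sum_Sn, IH by (intros; apply H; lia). rewrite H by lia.
    change (@plus C_AbelianMonoid ?a ?b) with (Cplus a b). apply C_eq; simpl; ring. Qed.

Lemma P1 m d b z : (d <= m)%nat -> (forall j, (d < j <= m)%nat -> b j = RtoC 0) ->
  poly_eval m b z = sum_n (fun i => Cmult (b i) (pow_n z i)) d.
Proof. intros Hd H. unfold poly_eval. replace m with (d + (m - d))%nat by lia.
  apply sum_n_trunc. intros j Hj. rewrite H by lia. apply C_eq; simpl; ring. Qed.

Lemma P2 b d xi : Cconj (sum_n (fun i => Cmult (b i) (pow_n (cexpi (- xi)) i)) d) =
  sum_n (fun i => Cmult (Cconj (b i)) (pow_n (cexpi xi) i)) d.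
Proof. rewrite Cconj_sum. apply sum_n_ext. intros i. rewrite Cmult_conj, !pow_cexpi, Cconj_cexpi.
  f_equal. f_equal. ring. Qed.

Lemma RtoC_pow (x : R) k : RtoC (x ^ k) = pow_n (RtoC x) k.
Proof. induction k as [|k IH]; [reflexivity|]. simpl pow. simpl pow_n. rewrite <- IH.
  change (mult ?a ?b) with (Cmult a b). apply C_eq; simpl; ring. Qed.

Lemma P3 z s : RtoC (Cmod z ^ (2 * s)) = pow_n (Cmult (Cconj z) z) s.
Proof. rewrite pow_mult, RtoC_pow, Cmod2_conj. f_equal. apply Cmult_comm. Qed.

Lemma P4 n u xi : fourier n u (- xi) =
  Cmult (pow_n (cexpi (- xi)) n)
    (sum_n (fun i => Cmult (RtoC (u (Z.sub (Z.of_nat i) (Z.of_nat n)))) (pow_n (cexpi xi) i)) (Nat.mul 2 n)).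
Proof. unfold fourier, zsum_win. rewrite <- sum_n_Cmult_l. apply sum_n_ext. intros i.
  rewrite !pow_cexpi. rewrite Cmult_assoc, (Cmult_comm (cexpi _)), <- Cmult_assoc, cexpi_add.
  f_equal. f_equal. rewrite minus_IZR, <- !INR_IZR_INZ. ring. Qed.

Lemma Cmod_pow_n z k : Cmod (pow_n z k) = Cmod z ^ k.
Proof. induction k as [|k IH]; simpl.
  - change (one : C) with (RtoC 1). rewrite Cmod_R, Rabs_R1. reflexivity.
  - change (mult z (pow_n z k)) with (Cmult z (pow_n z k)). rewrite Cmod_mult, IH. reflexivity. Qed.

Lemma poly_eval_0 m b : poly_eval m b (RtoC 0) = b O.
Proof. unfold poly_eval. induction m as [|m IH].
  - rewrite sum_O. simpl. change (one : C) with (RtoC 1). apply C_eq; simpl; ring.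
  - rewrite sum_Sn, IH. change (@plus C_AbelianMonoid ?a ?b) with (Cplus a b). simpl pow_n.
    change (mult ?a ?c) with (Cmult a c). apply C_eq; simpl; ring. Qed.

Lemma exists_max (P : nat -> Prop) m : (exists i, (i <= m)%nat /\ P i) ->
  exists d, (d <= m)%nat /\ P d /\ forall j, (d < j <= m)%nat -> ~ P j.
Proof. induction m as [|m IH]; intros [i [Hi Pi]].
  - exists 0%nat. replace i with 0%nat in Pi by lia. split; [lia|split; [exact Pi|]]. intros; lia.
  - destruct (Classical_Prop.classic (P (S m))) as [H|H].
    + exists (S m). split; [lia|split; [exact H|]]. intros; lia.
    + destruct IH as [d [Hd [Pd Hmax]]].
      * exists i. split; [|exact Pi]. destruct (Nat.eq_dec i (S m)); [subst; contradiction|lia].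
      * exists d. split; [lia|split; [exact Pd|]]. intros j Hj.
        destruct (Nat.eq_dec j (S m)) as [->|Hne]; [exact H|]. apply Hmax. lia. Qed.

Theorem proposition1p3 (l n : nat) (u : Z -> R) (m : nat) (b : nat -> C) :
  (0 < l)%nat -> Nat.Even l ->
  (0 < n)%nat -> Nat.divide (l / 2) n ->
  (forall j : Z, (Z.abs j > Z.of_nat n)%Z -> u j = 0) ->
  (forall j : Z, u j = u (- j)%Z) ->
  zsum_win n (fun j => RtoC (u j)) = RtoC 1 ->
  (forall z : C, Cmod z < 1 -> poly_eval m b z <> RtoC 0) ->
  (forall xi : R, fourier n u xi = RtoC (Cmod (poly_eval m b (cexpi xi)) ^ l)) ->
  Rbar_le (Finite ((2 / (1 + 2 * INR n / INR l)) ^ l)) (op_sup l n u).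
Proof.
  intros Hl [s Hs] Hn [q Hq] _ _ Hsum Hzero Hfour.
  assert (Hl2 : (l / 2 = s)%nat) by (subst l; rewrite Nat.mul_comm, Nat.div_mul; lia).
  rewrite Hl2 in Hq.
  assert (Hs0 : (0 < s)%nat) by lia.
  assert (Hq0 : (0 < q)%nat) by (subst n; lia).
  set (N := S q).
  assert (HN : 1 + 2 * INR n / INR l = INR N).
  { subst n l. unfold N. rewrite S_INR, !mult_INR. simpl INR.
    assert (0 < INR s) by (apply lt_0_INR; lia). field. lra. }
  rewrite HN.
  assert (Hb0 : b O <> RtoC 0).
  { rewrite <- (poly_eval_0 m b). apply Hzero. rewrite Cmod_0. lra. }
  assert (HQ1 : Cmod (poly_eval m b (cexpi 0)) = 1).
  { pose proof (Hfour 0) as H0.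
    assert (E : fourier n u 0 = RtoC 1).
    { rewrite <- Hsum. unfold fourier, zsum_win. apply sum_n_ext. intros i.
      rewrite Rmult_0_r, cexpi_0. apply C_eq; simpl; ring. }
    rewrite E in H0. apply (f_equal fst) in H0. simpl in H0.
    symmetry in H0. apply pow_R1 in H0. destruct H0 as [H0|H0]; [|lia].
    rewrite Rabs_right in H0; [exact H0| apply Rle_ge, Cmod_ge_0]. }
  assert (Hdeg : forall i, (N <= i <= m)%nat -> b i = RtoC 0).
  { intros i Hi. destruct (Classical_Prop.classic (b i = RtoC 0)) as [E|E]; [exact E|exfalso].
    destruct (exists_max (fun j => (q < j)%nat /\ b j <> RtoC 0) m) as [d [Hdm [[Hqd Hbd] Hmax]]].
    { exists i. split; [lia|]. split; [unfold N in Hi; lia|exact E]. }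
    assert (Htr : forall j, (d < j <= m)%nat -> b j = RtoC 0).
    { intros j Hj. destruct (Classical_Prop.classic (b j = RtoC 0)) as [E'|E']; [exact E'|].
      exfalso. apply (Hmax j Hj). split; [lia|exact E']. }
    apply (MC.B2_C s q n d u b Hs0 ltac:(lia) Hqd Hbd Hb0).
    intros xi. rewrite <- P4, Hfour, Hs, P3. rewrite (P1 m d b (cexpi (- xi)) Hdm Htr).
    rewrite P2. reflexivity. }
  destruct (B3 N m b ltac:(unfold N; lia) Hdeg HQ1) as [t Ht].
  apply (partA l n u t).
  - apply pow_le. apply Rlt_le, Rdiv_lt_0_compat; [lra| apply lt_0_INR; unfold N; lia].
  - rewrite Cmod_mult, Cmod_pow_n, Hfour, Cmod_R, Rabs_right by (apply Rle_ge, pow_le, Cmod_ge_0).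
    rewrite <- Rpow_mult_distr. apply pow_incr. split; [|exact Ht].
    apply Rlt_le, Rdiv_lt_0_compat; [lra| apply lt_0_INR; unfold N; lia].
Qed.
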